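(* Let $d_2=1$ and assume Assumptions 1 and 2. Then $$\sum_{n=1}^N\big(\hat p(\hat x_n,\hat y_n)-p^*_{\theta_*}(\hat x_n,\hat y_n)\big)^2\ \le\ \frac{Nx_{\max}^2y_{\max}^2}{y_{\min}^2\,\lambda_{\min}(\mathbb E[xx^\top])}\,\mathbb E_{x,y}\big[(\hat p(x,y)-p^*_{\theta_*}(x,y))^2\big],$$ where $(x,y)$ is distributed as an online feature.
   Context: Online features $(x,y)\in\mathcal X\times\mathcal Y\subset\mathbb R^{d_1}\times\mathbb R$ (here $d_2=1$), unknown online parameter $\theta_*=(\alpha_*,\beta_* )\in\Theta^\dagger$. Offline features and prices $\{(\hat x_n,\hat y_n,\hat p_n)\}_{n=1}^N$ with $(\hat x_n,\hat y_n)\in\mathcal X\times\mathcal Y$. $p^*_\theta(x,y)=\arg\max_{p\ge0}p(\alpha^\top x+\beta yp)$. Assumption 1: $\Theta^\dagger$, $\mathcal X\times\mathcal Y$ compact with $\|\alpha\|\le\alpha_{\max},|\beta|\le\beta_{\max},\|x\|\le x_{\max},|y|\le y_{\max}$; $\mathbb E[xx^\top]$ and $\mathbb E[y^2]$ positive; positive constants with $l_\alpha\le\alpha^\top x\le u_\alpha$, $l_\beta\le-\beta y\le u_\beta$ for all $(\alpha,\beta)\in\Theta^\dagger,(x,y)\in\mathcal X\times\mathcal Y$; hence $p^*_\theta(x,y)=-\alpha^\top x/(2\beta y)$ and $|y|\ge y_{\min}>0$ on $\mathcal Y$. Assumption 2: $\hat\Sigma_{x,x}=\sum_n\hat x_n\hat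 x_n^\top$ satisfies $\lambda_{\min}(\hat\Sigma_{x,x})\ge cN$ for some $c>0$. Define $\hat A=\hat\Sigma_{x,x}^{-1}\sum_n\hat x_n\hat y_n\hat p_n\in\mathbb R^{d_1}$ and $\hat p(x,y)=\hat A^\top x/y$. *)

(* Defs.v *)
From HB Require Import structures.
From mathcomp Require Import all_boot all_order all_algebra.
From mathcomp Require Import all_classical all_reals all_analysis.
Set Implicit Arguments. Unset Strict Implicit. Unset Printing Implicit Defensive.
Import Order.TTheory GRing.Theory Num.Theory.
Import numFieldNormedType.Exports.
Local Open Scope ring_scope.
Local Open Scope classical_set_scope.

Section Defs.
Variable R : realType.

Definition dotv (d : nat) (u v : 'rV[R]_d) : R := \sum_(i < d) u 0 i * v 0 i.
Definition enorm (d : nat) (u : 'rV[R]_d) : R := Num.sqrt (dotv u u).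

Definition lambda_min (d : nat) (M : 'M[R]_d) : R := inf [set a : R | eigenvalue M a].

(* optimal price p*_theta(x,y) = -alpha^T x / (2 beta y), theta = (alpha, beta) *)
Definition pstar (d : nat) (th : 'rV[R]_d * R) (x : 'rV[R]_d) (y : R) : R :=
  - dotv th.1 x / (2 * th.2 * y).

Definition Sigma_hat (d N : nat) (xh : 'I_N -> 'rV[R]_d) : 'M[R]_d :=
  \sum_(n < N) (xh n)^T *m xh n.

Definition A_hat (d N : nat) (xh : 'I_N -> 'rV[R]_d) (yh ph : 'I_N -> R) : 'cV[R]_d :=
  invmx (Sigma_hat xh) *m (\sum_(n < N) (yh n * ph n) *: (xh n)^T).

Definition p_hat (d N : nat) (xh : 'I_N -> 'rV[R]_d) (yh ph : 'I_N -> R)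
  (x : 'rV[R]_d) (y : R) : R := (x *m A_hat xh yh ph) 0 0 / y.

Definition Exx (dT : measure_display) (T : measurableType dT) (P : probability T R)
  (d : nat) (x : T -> 'rV[R]_d) : 'M[R]_d :=
  \matrix_(i, j) fine (\int[P]_t (x t 0 i * x t 0 j)%:E).

End Defs.

(* Main.v *)
Require Import Defs.
From HB Require Import structures.
From mathcomp Require Import all_boot all_order all_algebra.
From mathcomp Require Import all_classical all_reals all_analysis.
From mathcomp Require Import ring lra.
Set Implicit Arguments. Unset Strict Implicit. Unset Printing Implicit Defensive.
Import Order.TTheory GRing.Theory Num.Theory.
Import numFieldNormedType.Exports.
Local Open Scope ring_scope.
Local Open Scope classical_set_scope.
Section Helpers.
Variable R : realType.

Lemma dotvE d (u v : 'rV[R]_d) : dotv u v = (u *m v^T) 0 0.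
Proof. by rewrite /dotv !mxE; apply: eq_bigr => i _; rewrite mxE. Qed.

Lemma dotv_ge0 d (u : 'rV[R]_d) : 0 <= dotv u u.
Proof. by rewrite /dotv; apply: sumr_ge0 => i _; rewrite -expr2 sqr_ge0. Qed.

Lemma dotv_coord d (u : 'rV[R]_d) i : u 0 i ^+ 2 <= dotv u u.
Proof.
rewrite /dotv (bigD1 i) //= -expr2 lerDl.
by apply: sumr_ge0 => j _; rewrite -expr2 sqr_ge0.
Qed.

Lemma dotv_eq0 d (u : 'rV[R]_d) : dotv u u = 0 -> u = 0.
Proof.
move=> H; apply/rowP => i; rewrite mxE.
have := dotv_coord u i; rewrite H => h.
by apply/eqP; rewrite -sqrf_eq0 eq_le h sqr_ge0.
Qed.

Lemma cont_sum (T : topologicalType) (I : Type) (r : seq I) (f : I -> T -> R) :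
  (forall i, continuous (f i)) -> continuous (fun t => \sum_(i <- r) f i t).
Proof.
move=> cf; elim: r => [|i r IH].
  under eq_fun do rewrite big_nil.
  exact: cst_continuous.
under eq_fun do rewrite big_cons.
move=> t; apply: continuousD; [exact: cf|exact: IH].
Qed.

Definition bil d (B : 'M[R]_d) (u v : 'rV[R]_d) : R := (u *m B *m v^T) 0 0.

Lemma bilE d (B : 'M[R]_d) u v :
  bil B u v = \sum_i \sum_j u 0 i * B i j * v 0 j.
Proof.
rewrite /bil mxE [RHS]exchange_big /=; apply: eq_bigr => j _; rewrite !mxE mulr_suml.
by apply: eq_bigr.
Qed.

Lemma bil_cont d (B : 'M[R]_d) : continuous (fun u => bil B u u).
Proof.
have -> : (fun u => bil B u u) = (fun u => \sum_i \sum_j u 0 i * B i j * u 0 j).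
  by apply/funext => u; rewrite bilE.
apply: cont_sum => i; apply: cont_sum => j => u.
apply: (@continuousM _ _ (fun u : 'rV[R]_d => u 0 i * B i j) (fun u => u 0 j)).
  apply: (@continuousM _ _ (fun u : 'rV[R]_d => u 0 i) (fun u => B i j)).
    exact: coord_continuous.
  exact: cst_continuous.
exact: coord_continuous.
Qed.

Lemma dotv_bil d (u v : 'rV[R]_d) : dotv u v = bil 1%:M u v.
Proof. by rewrite dotvE /bil mulmx1. Qed.

Lemma bilDl d (B : 'M[R]_d) u v w : bil B (u + v) w = bil B u w + bil B v w.
Proof. by rewrite /bil !mulmxDl mxE. Qed.
Lemma bilDr d (B : 'M[R]_d) u v w : bil B w (u + v) = bil B w u + bil B w v.
Proof. by rewrite /bil raddfD /= mulmxDr mxE. Qed.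
Lemma bilZl d (B : 'M[R]_d) (t : R) u w : bil B (t *: u) w = t * bil B u w.
Proof. by rewrite /bil -!scalemxAl mxE. Qed.
Lemma bilZr d (B : 'M[R]_d) (t : R) u w : bil B w (t *: u) = t * bil B w u.
Proof. by rewrite /bil linearZ /= -scalemxAr mxE. Qed.
Lemma bil_sym d (B : 'M[R]_d) u w : B^T = B -> bil B u w = bil B w u.
Proof.
move=> sB; rewrite /bil.
have E : (u *m B *m w^T) 0 0 = ((u *m B *m w^T)^T) 0 0.
  by rewrite [RHS]mxE.
rewrite E.
by rewrite !trmx_mul trmxK sB mulmxA.
Qed.
Lemma bilBM d (M : 'M[R]_d) (m : R) u w :
  bil (M - m%:M) u w = bil M u w - m * dotv u w.
Proof.
rewrite dotv_bil /bil mulmxBr mulmxBl mul_mx_scalar -scalemxAl mulmx1.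
by rewrite [in LHS]mxE [X in _ + X = _]mxE [X in _ + - X = _]mxE.
Qed.


Lemma quad_zero (b c : R) : (forall t, 0 <= 2 * t * b + t ^+ 2 * c) -> b = 0.
Proof.
move=> H; pose k : R := `|c| + 1.
have kp : 0 < k by rewrite /k ltr_pwDr // normr_ge0.
have ck : c - 2 * k < 0.
  have hc : c <= `|c| by apply: ler_norm.
  have hn : 0 <= `|c| by apply: normr_ge0.
  move: hc hn; rewrite /k; generalize (`|c| : R) => n; lra.
have h := H (- b / k).
have E : k ^+ 2 * (2 * (- b / k) * b + (- b / k) ^+ 2 * c) = b ^+ 2 * (c - 2 * k).
  by field; rewrite gt_eqF.
have : 0 <= b ^+ 2 * (c - 2 * k) by rewrite -E mulr_ge0 // sqr_ge0.
move=> h2; have hb : b ^+ 2 <= 0 by nra.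
by apply/eqP; rewrite -sqrf_eq0 eq_le hb sqr_ge0.
Qed.


Lemma bil0l d (B : 'M[R]_d) u : bil B 0 u = 0.
Proof. by rewrite /bil !mul0mx mxE. Qed.

Lemma scale_unit d (u : 'rV[R]_d) : u != 0 ->
  let s := (Num.sqrt (bil 1%:M u u))^-1 in
  bil 1%:M (s *: u) (s *: u) = 1 /\ s ^+ 2 * bil 1%:M u u = 1.
Proof.
move=> u0 s.
have np : 0 < bil 1%:M u u.
  rewrite lt_def -dotv_bil dotv_ge0 andbT; apply/negP => /eqP/dotv_eq0.
  by apply/eqP.
have h : s ^+ 2 * bil 1%:M u u = 1.
  by rewrite /s exprVn sqr_sqrtr ?(ltW np) // mulVf // gt_eqF.
by rewrite bilZl bilZr mulrA -expr2 h.
Qed.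

Lemma rayleigh d (M : 'M[R]_d) : M^T = M -> 0 < lambda_min M ->
  forall v, lambda_min M * dotv v v <= bil M v v.
Proof.
move=> sM lp v.
have lbE : has_lbound [set a | eigenvalue M a].
  apply: contrapT => nlb; move: lp; rewrite /lambda_min inf_out ?ltxx //.
  by case=> _ /nlb.
have lamle a : eigenvalue M a -> lambda_min M <= a.
  by move=> h; apply: ge_inf.
have [->|v0] := eqVneq v 0.
  by rewrite dotv_bil !bil0l mulr0.
pose S := [set u : 'rV[R]_d | bil 1%:M u u = 1].
have S0 : S !=set0.
  by exists ((Num.sqrt (bil 1%:M v v))^-1 *: v); case: (scale_unit v0).
have cS : compact S.
  have bx := @rV_compact R d (fun _ => `[-1, 1]%classic) (fun _ => @segment_compact R (-1) 1).
  apply: (subclosed_compact _ bx).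
  - apply: (@preimage_closed _ _ (fun u => bil 1%:M u u) [set 1]).
      by move=> u _; apply: bil_cont.
    exact: closed_eq.
  move=> u Su i /=.
  have := dotv_coord u i; rewrite dotv_bil Su => h.
  rewrite in_itv /=; apply/andP; split; nra.
have [u0 u0S u0min] := compact_EVT_min S0 cS (continuous_subspaceT (@bil_cont d M)).
move: u0S; rewrite inE /= => u0S.
pose mu := bil M u0 u0.
have key : forall u, mu * dotv u u <= bil M u u.
  move=> u; have [->|un0] := eqVneq u 0; first by rewrite dotv_bil !bil0l mulr0.
  have [h1 h2] := scale_unit un0.
  set s := (Num.sqrt (bil 1%:M u u))^-1 in h1 h2.
  have := u0min (s *: u); rewrite inE => /(_ h1).
  rewrite bilZl bilZr mulrA -expr2 dotv_bil -/mu => h.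
  have np : 0 <= bil 1%:M u u by rewrite -dotv_bil dotv_ge0.
  have := ler_wpM2r np h; rewrite mulrAC h2 mul1r //.
pose B := M - mu%:M.
have sB : B^T = B by rewrite /B raddfB /= sM tr_scalar_mx.
pose r := u0 *m B.
have Br w : bil B u0 w = dotv r w by rewrite dotvE /bil.
have a0 : bil B u0 u0 = 0 by rewrite /B bilBM dotv_bil u0S mulr1 subrr.
have b0 : dotv r r = 0.
  rewrite -Br; apply: (@quad_zero _ (bil B r r)) => t.
  have := key (u0 + t *: r); rewrite -subr_ge0 -bilBM -/B.
  rewrite bilDl !bilDr !bilZl !bilZr a0 (bil_sym _ _ sB) => h.
  set p := bil B r u0 in h *; set q := bil B r r in h *.
  suff -> : 2 * t * p + t ^+ 2 * q = 0 + t * p + (t * p + t * (t * q)) by [].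
  by ring.
have r0 : r = 0 by apply: dotv_eq0.
have ev : eigenvalue M mu.
  apply/eigenvalueP; exists u0.
    by apply/eqP; rewrite -subr_eq0 -mul_mx_scalar -mulmxBr; apply/eqP; exact: r0.
  apply/eqP => u00; move: u0S; rewrite /S /= u00 bil0l => /eqP; by rewrite eq_sym oner_eq0.
apply: le_trans (key v); apply: ler_wpM2r; first exact: dotv_ge0.
exact: lamle.
Qed.


Lemma cs d (w x : 'rV[R]_d) : dotv w x ^+ 2 <= dotv w w * dotv x x.
Proof.
have s1 : (1%:M : 'M[R]_d)^T = 1%:M by rewrite tr_scalar_mx.
have [->|w0] := eqVneq w 0.
  by rewrite !dotv_bil !bil0l expr2 !mul0r.
have ap : 0 < dotv w w.
  by rewrite lt_def dotv_ge0 andbT; apply/negP => /eqP/dotv_eq0; apply/eqP.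
have := dotv_ge0 (dotv w w *: x + (- dotv w x) *: w).
rewrite !dotv_bil bilDl !bilDr !bilZl !bilZr (bil_sym w x s1) -!dotv_bil.
set a := dotv w w; set b := dotv x w; set c := dotv x x => h.
have h2 : 0 <= a * (a * c - b ^+ 2).
  by rewrite (_ : a * (a * c - b ^+ 2) = a * (a * c) + a * (- b * b) + (- b * (a * b) + - b * (- b * a))) //; ring.
by move: h2; rewrite pmulr_rge0 // subr_ge0.
Qed.

Lemma measurable_inv : measurable_fun setT (@GRing.inv R).
Proof.
have -> : [set: R] = [set x | x != 0] `|` [set 0].
  apply/seteqP; split => x //= _.
  by case: (eqVneq x 0) => h; [right | left].
have mD : measurable [set x : R | x != 0].
  exact: (measurable_realfun.open_measurable (@open_neq R 0)).
apply/(measurable_funU _ mD (measurable_set1 0)).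
split; last exact: measurable_fun_set1.
apply: measurable_realfun.open_continuous_measurable_fun; first exact: open_neq.
by move=> x; rewrite inE /= => hx; apply: inv_continuous.
Qed.

Lemma bounded_of (T : Type) (A : set T) (f : T -> R) K :
  (forall t, A t -> `|f t| <= K) -> [bounded f x | x in A].
Proof.
move=> h; exists K; split; first exact: num_real.
by move=> M hM t At /=; exact: le_trans (h t At) (ltW hM).
Qed.

End Helpers.

Unset Implicit Arguments.

Theorem lemmaD10 (R : realType) (dT : measure_display) (T : measurableType dT)
  (P : probability T R) (d N : nat)
  (x : T -> 'rV[R]_d) (y : T -> R)
  (Theta XY : set ('rV[R]_d * R)) (th : 'rV[R]_d * R)
  (xh : 'I_N -> 'rV[R]_d) (yh ph : 'I_N -> R)
  (amax bmax xmax ymax ymin la ua lb ub c : R) :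
  (* Assumption 1 *)
  compact Theta -> compact XY ->
  th \in Theta ->
  (forall z, z \in Theta -> enorm z.1 <= amax /\ `|z.2| <= bmax) ->
  (forall z, z \in XY -> enorm z.1 <= xmax /\ `|z.2| <= ymax) ->
  (forall i, measurable_fun setT (fun t => x t 0 i)) ->
  measurable_fun setT y ->
  (forall t, (x t, y t) \in XY) ->
  0 < lambda_min (Exx P x) ->
  (0 < \int[P]_t ((y t) ^+ 2)%:E)%E ->
  0 < la -> 0 < ua -> 0 < lb -> 0 < ub ->
  (forall th' z, th' \in Theta -> z \in XY ->
     la <= dotv th'.1 z.1 <= ua /\ lb <= - (th'.2 * z.2) <= ub) ->
  0 < ymin -> (forall z, z \in XY -> ymin <= `|z.2|) ->
  (* offline data *)
  (forall n, (xh n, yh n) \in XY) ->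
  (* Assumption 2 *)
  0 < c -> c * N%:R <= lambda_min (Sigma_hat xh) ->
  ((\sum_(n < N) (p_hat xh yh ph (xh n) (yh n) - pstar th (xh n) (yh n)) ^+ 2)%:E
   <= ((N%:R * xmax ^+ 2 * ymax ^+ 2) / (ymin ^+ 2 * lambda_min (Exx P x)))%:E
      * \int[P]_t ((p_hat xh yh ph (x t) (y t) - pstar th (x t) (y t)) ^+ 2)%:E)%E.
Proof.
move=> _ _ _ _ hXY mx my xyXY lp _ _ _ _ _ _ ymp hymin xhXY _ _.
set lam := lambda_min (Exx P x).
have xb z : z \in XY -> dotv z.1 z.1 <= xmax ^+ 2.
  move=> /hXY [h _]; move: h; rewrite /enorm => h.
  rewrite -(sqr_sqrtr (dotv_ge0 z.1)) ler_pXn2r ?nnegrE ?sqrtr_ge0 //.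
  exact: le_trans (sqrtr_ge0 _) h.
have yb z : z \in XY -> ymin ^+ 2 <= z.2 ^+ 2 <= ymax ^+ 2.
  move=> zXY; have [_ h2] := hXY z zXY; have h1 := hymin z zXY.
  rewrite -(real_normK (num_real z.2)).
  have n0 : 0 <= `|z.2| by apply: normr_ge0.
  apply/andP; split; rewrite ler_pXn2r ?nnegrE //.
  - exact: ltW ymp.
  - exact: le_trans (ltW ymp) (le_trans h1 h2).
have [t0 _] : exists t : T, True.
  apply: contrapT => hn.
  have : P setT = 0%E.
    by rewrite (_ : setT = set0) ?measure0 //; apply/seteqP; split => t //= _; apply: hn; exists t.
  by rewrite probability_setT => /eqP; rewrite eqe oner_eq0.
have ymaxp : 0 < ymax ^+ 2.
  have /andP[h1 h2] := yb _ (xyXY t0).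
  exact: lt_le_trans (exprn_gt0 _ ymp) (le_trans h1 h2).

set A := A_hat xh yh ph.
pose w : 'rV[R]_d := A^T + (2 * th.2)^-1 *: th.1.
have s1 : (1%:M : 'M[R]_d)^T = 1%:M by rewrite tr_scalar_mx.
have diff xx yy : p_hat xh yh ph xx yy - pstar th xx yy = dotv w xx / yy.
  rewrite /p_hat /pstar -/A.
  have -> : (xx *m A) 0 0 = dotv A^T xx.
    by rewrite dotv_bil bil_sym // -dotv_bil dotvE trmxK.
  rewrite (dotv_bil w xx) /w bilDl bilZl -!dotv_bil invfM.
  by ring.
have xmax0 : 0 <= xmax.
  have [h _] := hXY _ (xyXY t0); exact: le_trans (sqrtr_ge0 _) h.
have bnd n : (dotv w (xh n) / yh n) ^+ 2 <= dotv w w * xmax ^+ 2 / ymin ^+ 2.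
  have /andP[y1 _] := yb _ (xhXY n).
  have xn := xb _ (xhXY n).
  have csn := cs w (xh n).
  have yminp : 0 < ymin ^+ 2 by apply: exprn_gt0.
  have yp : 0 < yh n ^+ 2 by apply: lt_le_trans y1.
  rewrite expr_div_n; apply: (@le_trans _ _ (dotv w (xh n) ^+ 2 / ymin ^+ 2)).
    apply: ler_wpM2l; first exact: sqr_ge0.
    by rewrite lef_pV2 ?posrE.
  apply: ler_wpM2r; first by rewrite invr_ge0 ltW.
  apply: le_trans csn _; apply: ler_wpM2l => //; exact: dotv_ge0.
have lhs : \sum_(n < N) (p_hat xh yh ph (xh n) (yh n) - pstar th (xh n) (yh n)) ^+ 2
    <= N%:R * (dotv w w * xmax ^+ 2 / ymin ^+ 2).
  rewrite (eq_bigr (fun n => (dotv w (xh n) / yh n) ^+ 2)); last by move=> n _; rewrite diff.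
  apply: le_trans (ler_sum _ (fun n _ => bnd n)) _.
  by rewrite sumr_const card_ord mulr_natl.

pose g t := dotv w (x t).
have mT : measurable [set: T] := measurableT.
under eq_integral => t _ do rewrite diff.
have mg : measurable_fun setT g.
  rewrite /g /dotv; apply: measurable_sum => i.
  exact: measurable_realfun.measurable_funM (measurable_cst _) (mx i).
have xib t i : `|x t 0 i| <= xmax.
  have h := le_trans (dotv_coord (x t) i) (xb _ (xyXY t)).
  by rewrite -(ler_pXn2r (n:=2)) ?nnegrE ?normr_ge0 // real_normK ?num_real.
have hint i j : P.-integrable setT (fun t => (x t 0 i * x t 0 j)%:E).
  apply: (measurable_bounded_integrable (f := fun t => x t 0 i * x t 0 j)) => //.
  - rewrite [X in (X < _)%E](_ : _ = 1%E) ?ltry //.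
    exact: probability_setT.
  - exact: measurable_realfun.measurable_funM (mx i) (mx j).
  - apply: (bounded_of (K := xmax * xmax)) => t _.
    by rewrite normrM ler_pM ?normr_ge0.
have e1 t : ((g t) ^+ 2)%:E =
    (\sum_i \sum_j ((w 0 i * w 0 j)%:E * (x t 0 i * x t 0 j)%:E))%E.
  have -> : (g t) ^+ 2 = \sum_i \sum_j (w 0 i * w 0 j) * (x t 0 i * x t 0 j).
    rewrite expr2 /g /dotv mulr_suml; apply: eq_bigr => i _.
    rewrite mulr_sumr; apply: eq_bigr => j _; ring.
  rewrite -sumEFin; apply: eq_bigr => i _; rewrite -sumEFin; apply: eq_bigr => j _.
  by rewrite EFinM.
have Ig : (\int[P]_t ((g t) ^+ 2)%:E = (bil (Exx P x) w w)%:E)%E.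
  under eq_integral => t _ do rewrite e1.
  rewrite integral_sum; [| exact: measurableT |]; last first.
    move=> i; apply: (integrable_sum measurableT) => j _; apply: (integrableZl measurableT); exact: hint.
  rewrite bilE -sumEFin; apply: eq_bigr => i _.
  rewrite integral_sum; [| exact: measurableT |]; last first.
    by move=> j; apply: (integrableZl measurableT); exact: hint.
  rewrite -sumEFin; apply: eq_bigr => j _.
  rewrite integralZl; [| exact: measurableT | exact: hint].
  rewrite -(fineK (integrable_fin_num measurableT (hint i j))) -EFinM /Exx [X in _ = (_ * X * _)%:E]mxE /=.
  by congr EFin; rewrite mulrAC.
have sE : (Exx P x)^T = Exx P x.
  apply/matrixP => i j; rewrite !mxE; congr fine; apply: eq_integral => t _.
  by rewrite mulrC.
have ray := rayleigh sE lp w.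

have ymp2 : 0 < ymin ^+ 2 by apply: exprn_gt0.
have Ilow : (((ymax ^+ 2)^-1 * bil (Exx P x) w w)%:E
    <= \int[P]_t ((dotv w (x t) / y t) ^+ 2)%:E)%E.
  rewrite EFinM -Ig.
  rewrite -(@ge0_integralZl_EFin _ _ _ P setT measurableT (fun t => ((g t) ^+ 2)%:E)); last first.
  - by rewrite invr_ge0 ltW.
  - by apply/measurable_realfun.measurable_EFinP; apply: measurable_realfun.measurable_funX.
  - by move=> t _; rewrite lee_fin sqr_ge0.
  apply: ge0_le_integral => //.
  - by move=> t _; rewrite -EFinM lee_fin; apply: mulr_ge0; [rewrite invr_ge0 ltW | exact: sqr_ge0].
  - have -> : (fun t => ((ymax ^- 2)%:E * (g t ^+ 2)%:E)%E) = (fun t => ((ymax ^- 2) * g t ^+ 2)%:E).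
      by apply/funext => t; rewrite EFinM.
    apply/measurable_realfun.measurable_EFinP.
    apply: (measurable_realfun.measurable_funM (measurable_cst _)).
    exact: measurable_realfun.measurable_funX.
  - apply/measurable_realfun.measurable_EFinP; apply: measurable_realfun.measurable_funX.
    have -> : (fun t => dotv w (x t) / y t) = (g \* (GRing.inv \o y)) by [].
    have m2 := measurableT_comp (@measurable_inv R) my.
    exact: measurable_realfun.measurable_funM mg m2.
  move=> t _; rewrite -EFinM lee_fin expr_div_n mulrC.
  apply: ler_wpM2l; first exact: sqr_ge0.
  have /andP[y1 y2] := yb _ (xyXY t).
  have yp : 0 < y t ^+ 2 by apply: lt_le_trans y1.
  by rewrite lef_pV2 ?posrE.
have K0 : 0 <= (N%:R * xmax ^+ 2 * ymax ^+ 2) / (ymin ^+ 2 * lam).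
  apply: divr_ge0; [apply: mulr_ge0; [apply: mulr_ge0; [exact: ler0n | exact: sqr_ge0] | exact: sqr_ge0] | apply: mulr_ge0; [exact: sqr_ge0 | exact: ltW lp]].
apply: (@le_trans _ _ (((N%:R * xmax ^+ 2 * ymax ^+ 2) / (ymin ^+ 2 * lam) *
   ((ymax ^+ 2)^-1 * bil (Exx P x) w w))%:E)); last first.
  by rewrite EFinM; apply: lee_wpmul2l; [rewrite lee_fin|].
rewrite lee_fin; apply: le_trans lhs _.
have -> : N%:R * (dotv w w * xmax ^+ 2 / ymin ^+ 2) =
   (N%:R * xmax ^+ 2 * ymax ^+ 2) / (ymin ^+ 2 * lam) * ((ymax ^+ 2)^-1 * (lam * dotv w w)).
  have ymax0 : ymax != 0 by apply/eqP => h; move: ymaxp; rewrite h expr0n ltxx.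
  have ymin0 : ymin != 0 by rewrite gt_eqF.
  have lam0 : lam != 0 by rewrite gt_eqF.
  by field; rewrite ymax0 ymin0 andbT; exact: lam0.
apply: ler_wpM2l => //; apply: ler_wpM2l => //; by rewrite invr_ge0 ltW.
Qed.
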